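(* Let $u>0$, $\Delta t,\Delta x>0$ with $\nu=u\Delta t/\Delta x\in(0,1]$. Let $a,b\in\mathbb R$, $x_0\in\mathbb R$, and let $c^{\rm ini}(x)=a$ for $x<x_0$ and $c^{\rm ini}(x)=b$ for $x>x_0$. Set $c_j^0=\frac1{\Delta x}\int_{(j-1/2)\Delta x}^{(j+1/2)\Delta x}c^{\rm ini}(x)\,dx$ and, for $n\ge0$, $c_j^{n+1}=c_j^n-\nu(c_{j+1/2}^n-c_{j-1/2}^n)$, where $c^n_{j+1/2}=\min(\max(\omega_{j+1/2},c_{j+1}^n),\Omega_{j+1/2})$ is the limited downwind flux computed from $(c^n_j)_j$. Then for all $n\ge0$ and $j\in\mathbb Z$, $$c_j^n=\frac1{\Delta x}\int_{(j-1/2)\Delta x}^{(j+1/2)\Delta x}c^{\rm ini}(x-un\Delta t)\,dx,$$ i.e. the scheme computes exactly the cell averages of the exact solution $c(t,x)=c^{\rm ini}(x-ut)$.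
   Context: Limited downwind flux: given $(c_j^n)_j$, let $m_{j+1/2}=\min(c_j^n,c_{j+1}^n)$, $M_{j+1/2}=\max(c_j^n,c_{j+1}^n)$, $\lambda_{j+1/2}=\frac1\nu(c_j^n-M_{j-1/2})+M_{j-1/2}$, $\Lambda_{j+1/2}=\frac1\nu(c_j^n-m_{j-1/2})+m_{j-1/2}$, and $[\omega_{j+1/2},\Omega_{j+1/2}]=[\lambda_{j+1/2},\Lambda_{j+1/2}]\cap[m_{j+1/2},M_{j+1/2}]$ (nonempty since it contains $c_j^n$ when $0<\nu\le1$). *)

(* Defs.v *)
From Stdlib Require Import Reals Lra ZArith.
Open Scope R_scope.

(* A grid function c : Z -> R, with c j = c_j.  Interface j+1/2 is indexed by j. *)
Definition m_half (c : Z -> R) (j : Z) : R := Rmin (c j) (c (j + 1)%Z).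
Definition M_half (c : Z -> R) (j : Z) : R := Rmax (c j) (c (j + 1)%Z).

Definition lam_half (nu : R) (c : Z -> R) (j : Z) : R :=
  (c j - M_half c (j - 1)%Z) / nu + M_half c (j - 1)%Z.
Definition Lam_half (nu : R) (c : Z -> R) (j : Z) : R :=
  (c j - m_half c (j - 1)%Z) / nu + m_half c (j - 1)%Z.

Definition omega_half (nu : R) (c : Z -> R) (j : Z) : R :=
  Rmax (lam_half nu c j) (m_half c j).
Definition Omega_half (nu : R) (c : Z -> R) (j : Z) : R :=
  Rmin (Lam_half nu c j) (M_half c j).

Definition ldw_flux (nu : R) (c : Z -> R) (j : Z) : R :=
  Rmin (Rmax (omega_half nu c j) (c (j + 1)%Z)) (Omega_half nu c j).

Definition ldw_step (nu : R) (c : Z -> R) (j : Z) : R :=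
  c j - nu * (ldw_flux nu c j - ldw_flux nu c (j - 1)%Z).

(* Main.v *)
Require Import Defs.
From Stdlib Require Import Reals Lra Psatz ZArith FunctionalExtensionality.
From Coquelicot Require Import Coquelicot.
Open Scope R_scope.

Definition s (t : R) : R := Rmin 1 (Rmax 0 t).
Definition flux3 (nu cl cm cr : R) : R :=
  Rmin (Rmax (Rmax ((cm - Rmax cl cm)/nu + Rmax cl cm) (Rmin cm cr)) cr)
       (Rmin ((cm - Rmin cl cm)/nu + Rmin cl cm) (Rmax cm cr)).

Lemma ldw_flux_eq nu c j :
  ldw_flux nu c j = flux3 nu (c (j-1)%Z) (c j) (c (j+1)%Z).
Proof.
  unfold ldw_flux, flux3, omega_half, Omega_half, lam_half, Lam_half, m_half, M_half.
  rewrite Z.sub_add. reflexivity.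
Qed.

Lemma flux_yy nu x y : 0 < nu -> nu <= 1 -> flux3 nu x y y = y.
Proof.
  intros h0 h1. set (r := /nu).
  assert (hr : r * nu = 1) by (unfold r; field; lra).
  assert (r >= 1) by nra.
  unfold flux3, Rdiv; fold r.
  unfold Rmin, Rmax; repeat destruct Rle_dec; nra.
Qed.

Lemma flux_yy2 nu y z : 0 < nu -> nu <= 1 -> flux3 nu y y z = y.
Proof.
  intros h0 h1. set (r := /nu).
  assert (hr : r * nu = 1) by (unfold r; field; lra).
  assert (r >= 1) by nra.
  unfold flux3, Rdiv; fold r.
  unfold Rmin, Rmax; repeat destruct Rle_dec; nra.
Qed.

Lemma flux_mid nu a b t : 0 < nu -> nu <= 1 -> 0 <= t <= 1 ->
  flux3 nu a (b + (a-b)*t) b = b + (a-b) * s ((t-1+nu)/nu).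
Proof.
  intros h0 h1 ht. set (r := /nu).
  assert (hr : r * nu = 1) by (unfold r; field; lra).
  assert (r >= 1) by nra.
  set (w := (1-t)*r).
  assert (hw : 0 <= w) by (unfold w; nra).
  assert (hw2 : w >= 1 - t) by (unfold w; nra).
  assert (e1 : (t-1+nu)/nu = 1 - w) by (unfold w, r; field; lra).
  rewrite e1.
  destruct (Rle_dec a b).
  - assert (a <= b + (a-b)*t) by nra.
    assert (b + (a-b)*t <= b) by nra.
    unfold flux3. rewrite (Rmax_right a) by lra. rewrite (Rmin_left a) by lra.
    rewrite (Rmin_left (b + _)) by lra. rewrite (Rmax_right (b + _)) by lra.
    replace ((b + (a - b) * t - a) / nu) with ((b-a)*w) by (unfold w, r; field; lra).
    replace ((b + (a - b) * t - (b + (a - b) * t)) / nu) with 0 by (field; lra).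
    unfold s, Rmin, Rmax; repeat destruct Rle_dec; nra.
  - assert (a >= b + (a-b)*t) by nra.
    assert (b + (a-b)*t >= b) by nra.
    unfold flux3. rewrite (Rmax_left a) by lra. rewrite (Rmin_right a) by lra.
    rewrite (Rmin_right (b + _)) by lra. rewrite (Rmax_left (b + _)) by lra.
    replace ((b + (a - b) * t - a) / nu) with ((b-a)*w) by (unfold w, r; field; lra).
    replace ((b + (a - b) * t - (b + (a - b) * t)) / nu) with 0 by (field; lra).
    unfold s, Rmin, Rmax; repeat destruct Rle_dec; nra.
Qed.

Lemma scale_s v x : 0 < v -> v * s (x/v) = Rmin v (Rmax 0 x).
Proof.
  intros hv. set (y := x/v).
  assert (ex : x = y * v) by (unfold y; field; lra).
  rewrite ex. unfold s, Rmin, Rmax; repeat destruct Rle_dec; nra.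
Qed.

Lemma step_id nu t : 0 < nu -> nu <= 1 ->
  s t - nu * (s ((t-1+nu)/nu) - s ((t+1-1+nu)/nu)) = s (t+nu).
Proof.
  intros h0 h1.
  rewrite Rmult_minus_distr_l, !scale_s by lra.
  unfold s, Rmin, Rmax; repeat destruct Rle_dec; lra.
Qed.
Lemma s_le0 x : x <= 0 -> s x = 0.
Proof. intros; unfold s, Rmin, Rmax; repeat destruct Rle_dec; lra. Qed.
Lemma s_ge1 x : 1 <= x -> s x = 1.
Proof. intros; unfold s, Rmin, Rmax; repeat destruct Rle_dec; lra. Qed.
Lemma s_mid x : 0 <= x <= 1 -> s x = x.
Proof. intros; unfold s, Rmin, Rmax; repeat destruct Rle_dec; lra. Qed.

Definition E (a b p : R) (j : Z) : R := b + (a-b) * s (p - IZR j + /2).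

Lemma flux_E nu a b p j : 0 < nu -> nu <= 1 ->
  ldw_flux nu (E a b p) j = b + (a-b) * s ((p - IZR j + /2 - 1 + nu)/nu).
Proof.
  intros h0 h1. rewrite ldw_flux_eq. unfold E.
  rewrite minus_IZR, plus_IZR.
  set (t := p - IZR j + /2).
  replace (p - (IZR j - 1) + /2) with (t+1) by (unfold t; ring).
  replace (p - (IZR j + 1) + /2) with (t-1) by (unfold t; ring).
  destruct (Rle_dec t 0).
  - rewrite (s_le0 t), (s_le0 (t-1)) by lra.
    rewrite (s_le0 ((t-1+nu)/nu)).
    + rewrite Rmult_0_r, Rplus_0_r. apply flux_yy; lra.
    + unfold Rdiv. assert (0 < /nu) by (apply Rinv_0_lt_compat; lra). nra.
  - destruct (Rle_dec t 1).
    + rewrite (s_ge1 (t+1)), (s_mid t), (s_le0 (t-1)) by lra.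
      rewrite Rmult_1_r, Rmult_0_r, Rplus_0_r.
      replace (b + (a-b)) with a by ring.
      apply flux_mid; lra.
    + rewrite (s_ge1 (t+1)), (s_ge1 t) by lra.
      rewrite (s_ge1 ((t-1+nu)/nu)).
      * apply flux_yy2; lra.
      * apply (Rmult_le_reg_r nu); try lra. unfold Rdiv. rewrite Rmult_assoc, Rinv_l; lra.
Qed.

Lemma step_E nu a b p j : 0 < nu -> nu <= 1 ->
  ldw_step nu (E a b p) j = E a b (p + nu) j.
Proof.
  intros h0 h1. unfold ldw_step. rewrite !flux_E by lra.
  rewrite minus_IZR.
  unfold E.
  replace (p - (IZR j - 1) + /2 - 1 + nu) with (p - IZR j + /2 + 1 - 1 + nu) by ring.
  replace (p + nu - IZR j + /2) with ((p - IZR j + /2) + nu) by ring.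
  rewrite <- (step_id nu (p - IZR j + /2)) by lra.
  ring.
Qed.

Lemma int_step (f : R -> R) a b X lo hi : lo < hi ->
  (forall x, x < X -> f x = a) -> (forall x, X < x -> f x = b) ->
  is_RInt f lo hi (b*(hi-lo) + (a-b)*Rmin (hi-lo) (Rmax 0 (X-lo))).
Proof.
  intros hlh ha hb.
  destruct (Rle_dec X lo).
  - replace (b*(hi-lo) + (a-b)*Rmin (hi-lo) (Rmax 0 (X-lo))) with (scal (hi-lo) b).
    + apply (is_RInt_ext (fun _ => b)).
      * intros x hx. rewrite Rmin_left in hx by lra. symmetry; apply hb; lra.
      * apply (@is_RInt_const R_NormedModule).
    + change (scal (hi-lo) b) with ((hi-lo)*b).
      rewrite (Rmax_left 0 (X-lo)) by lra. rewrite Rmin_right by lra. match goal with |- @eq _ ?x ?y => change (@eq R x y) end; ring.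
  - destruct (Rle_dec hi X).
    + replace (b*(hi-lo) + (a-b)*Rmin (hi-lo) (Rmax 0 (X-lo))) with (scal (hi-lo) a).
      * apply (is_RInt_ext (fun _ => a)).
        -- intros x hx. rewrite Rmax_right in hx by lra. symmetry; apply ha; lra.
        -- apply (@is_RInt_const R_NormedModule).
      * change (scal (hi-lo) a) with ((hi-lo)*a).
        rewrite (Rmax_right 0 (X-lo)) by lra. rewrite Rmin_left by lra. match goal with |- @eq _ ?x ?y => change (@eq R x y) end; ring.
    + replace (b*(hi-lo) + (a-b)*Rmin (hi-lo) (Rmax 0 (X-lo)))
        with (plus (scal (X-lo) a) (scal (hi-X) b)).
      * apply (is_RInt_Chasles f lo X hi).
        -- apply (is_RInt_ext (fun _ => a)).
           ++ intros x hx. rewrite Rmax_right in hx by lra. symmetry; apply ha; lra.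
           ++ apply (@is_RInt_const R_NormedModule).
        -- apply (is_RInt_ext (fun _ => b)).
           ++ intros x hx. rewrite Rmin_left in hx by lra. symmetry; apply hb; lra.
           ++ apply (@is_RInt_const R_NormedModule).
      * change (plus (scal (X-lo) a) (scal (hi-X) b)) with ((X-lo)*a + (hi-X)*b).
        rewrite (Rmax_right 0 (X-lo)) by lra. rewrite Rmin_right by lra. match goal with |- @eq _ ?x ?y => change (@eq R x y) end; ring.
Qed.

Lemma cell_avg (f : R -> R) a b X dx j : 0 < dx ->
  (forall x, x < X -> f x = a) -> (forall x, X < x -> f x = b) ->
  forall pr : Riemann_integrable f ((IZR j - /2) * dx) ((IZR j + /2) * dx),
  RiemannInt pr / dx = E a b (X/dx) j.
Proof.
  intros hdx ha hb pr.
  rewrite <- RInt_Reals.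
  rewrite (is_RInt_unique _ _ _ _ (int_step f a b X ((IZR j - /2) * dx) ((IZR j + /2) * dx) ltac:(nra) ha hb)).
  match goal with |- @eq _ ?x ?y => change (@eq R x y) end.
  replace ((IZR j + /2) * dx - (IZR j - /2) * dx) with dx by field.
  rewrite <- (scale_s dx (X - (IZR j - /2) * dx)) by lra.
  unfold E. replace (X / dx - IZR j + /2) with ((X - (IZR j - /2) * dx) / dx) by (field; lra).
  field; lra.
Qed.

Theorem mainTheorem4
  (u dt dx a b x0 : R) (cini : R -> R) (c : nat -> Z -> R)
  (hu : 0 < u) (hdt : 0 < dt) (hdx : 0 < dx)
  (hnu0 : 0 < u * dt / dx) (hnu1 : u * dt / dx <= 1)
  (hleft : forall x, x < x0 -> cini x = a)
  (hright : forall x, x0 < x -> cini x = b)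
  (hinit : forall j : Z,
      exists pr : Riemann_integrable cini ((IZR j - /2) * dx) ((IZR j + /2) * dx),
        c 0%nat j = RiemannInt pr / dx)
  (hstep : forall (n : nat) (j : Z),
      c (S n) j = ldw_step (u * dt / dx) (c n) j) :
  forall (n : nat) (j : Z),
    exists pr : Riemann_integrable (fun x => cini (x - u * INR n * dt))
                  ((IZR j - /2) * dx) ((IZR j + /2) * dx),
      c n j = RiemannInt pr / dx.
Proof.
  set (P n := (x0 + u * INR n * dt) / dx).
  assert (key : forall n j, c n j = E a b (P n) j).
  { induction n as [|n IH]; intro j.
    - destruct (hinit j) as [pr e]. rewrite e.
      rewrite (cell_avg cini a b x0 dx j hdx hleft hright pr).
      unfold P; simpl. f_equal. field; lra.
    - rewrite hstep.
      replace (c n) with (E a b (P n)) by (apply functional_extensionality; intro; symmetry; apply IH).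
      rewrite step_E by lra. unfold P. rewrite S_INR. f_equal. field; lra. }
  intros n j.
  assert (ha : forall x, x < x0 + u * INR n * dt -> cini (x - u * INR n * dt) = a)
    by (intros; apply hleft; lra).
  assert (hb : forall x, x0 + u * INR n * dt < x -> cini (x - u * INR n * dt) = b)
    by (intros; apply hright; lra).
  assert (hlh : (IZR j - /2) * dx < (IZR j + /2) * dx) by nra.
  exists (ex_RInt_Reals_0 _ _ _ (ex_intro _ _ (int_step _ a b _ _ _ hlh ha hb))).
  rewrite (cell_avg _ a b _ dx j hdx ha hb). apply key.
Qed.
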